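(* Let $G_m$ be a parametric regulatory network, $R$ a well-formed set of influence constraints, $v\in V$, and $(L,U)$ a pair of parametrisations. Let $M_v=\{(u,v,s)\in R\mid s\in\{-1,+1\}\}$. Then $\nabla_{M_v}(L,U)=(L,U)$ if and only if for all $\omega,\omega'\in\Omega_v$ with $\omega\preceq_v\omega'$ we have $L_{v,\omega}\le L_{v,\omega'}$ and $U_{v,\omega}\le U_{v,\omega'}$.
   Context: An influence graph is $G=(V,I)$, $V=\{1,\dots,n\}$, $I\subseteq V\times V$; regulators $n^-(v)=\{u\mid(u,v)\in I\}$. $m\in\mathbb N^n$, $D_v=\{0,\dots,m_v\}$, PRN $G_m=(G,m)$. Regulator states $\Omega_v=\prod_{u\in n^-(v)}D_u$; $\omega[u\leftarrow k]$ replaces component $u$ of $\omega$ by $k$. Parametrisations: vectors with coordinates $P_{v,\omega}\in D_v$ for $v\in V$, $\omega\in\Omega_v$. $R\subseteq V\times V\times\{+1,-1,\mathrm o\}$ is well-formed if $u\in n^-(v)$ for all $(u,v,c)\in R$ and never both $(u,v,+1),(u,v,-1)\in R$. Order $\preceq_v$ on $\Omega_v$: $\omega\preceq_v\omega'$ iff for all $u\in n^-(v)$, $\omega_u\le\omega'_u$ if $(u,v,+1)\in R$, $\omega_u\ge\omega'_u$ if $(u,v,-1)\in R$, $\omega_u=\omega'_u$ otherwise. For $s\in\{+1,-1\}$, $\nabla_{(u,v,s)}(L,U)$ is the fixpoint of iterating from $(L,U)$ the map $f(L,U)=(L',U')$ with, for all $\omega\in\Omega_v$, $L'_{v,\omega}=\max(\{L_{v,\omega}\}\cup\{L_{v,\omega[u\leftarrow\omega_u-s]}\mid\omega_u-s\in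 D_u\})$ and $U'_{v,\omega}=\min(\{U_{v,\omega}\}\cup\{U_{v,\omega[u\leftarrow\omega_u+s]}\mid\omega_u+s\in D_u\})$, all coordinates of other nodes unchanged. For a set $R'$ of such constraints, $\nabla_{R'}(L,U)$ is the fixpoint of iterating from $(L,U)$ the composition of the operators $\nabla_r$, $r\in R'$. *)

(* Defs.v *)
From HB Require Import structures.
From mathcomp Require Import all_boot all_order all_algebra.
Set Implicit Arguments. Unset Strict Implicit. Unset Printing Implicit Defensive.
Import GRing.Theory Num.Theory.

(* Signs of influence constraints: +1, -1, o *)
Inductive sgn := SPos | SNeg | SObs.
Definition sgn2o (s : sgn) : 'I_3 :=
  match s with SPos => inord 0 | SNeg => inord 1 | SObs => inord 2 end.
Definition o2sgn (i : 'I_3) : option sgn :=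
  match val i with 0 => Some SPos | 1 => Some SNeg | 2 => Some SObs | _ => None end.
Lemma sgn2oK : pcancel sgn2o o2sgn.
Proof. by case; rewrite /o2sgn /= inordK. Qed.
HB.instance Definition _ := Finite.copy sgn (pcan_type sgn2oK).

(* integer value of a +1/-1 sign (o is mapped to 0, never used) *)
Definition sgn_val (s : sgn) : int :=
  match s with SPos => 1%R | SNeg => (-1)%R | SObs => 0%R end.

Section PRN.
(* V = 'I_n, influence graph edges I, PRN maximal values m *)
Variables (n : nat) (I : {set 'I_n * 'I_n}) (m : 'I_n -> nat).

Definition regs (v : 'I_n) : {set 'I_n} := [set u | (u, v) \in I].

Definition fstate := {dffun forall u : 'I_n, 'I_(m u).+1}.

(* Omega_v : regulator states of v, i.e. states whose only (possibly nonzero)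
   components are the regulators of v; the other components are fixed to 0 and
   carry no information, so Omega v is in bijection with prod_{u in n^-(v)} D_u. *)
Definition valid_reg (v : 'I_n) (x : fstate) : bool :=
  [forall u, (u \notin regs v) ==> (val (x u) == 0%N)].
Definition Omega (v : 'I_n) := {x : fstate | valid_reg v x}.

Definition shift (v : 'I_n) (w : Omega v) (u : 'I_n) (d : int) : option (Omega v) :=
  let k : int := ((val (val w u))%:Z + d)%R in
  if (u \in regs v) && (0 <= k)%R && (k <= (m u)%:Z)%R then
    insub (finfun (fun x : 'I_n => @inord (m x) (if x == u then absz k else val (val w x)))
             : fstate)
  else None.

Definition param := {dffun forall v : 'I_n, {ffun Omega v -> 'I_(m v).+1}}.

Definition maxo k (a b : 'I_k) : 'I_k := if (val a < val b)%N then b else a.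
Definition mino k (a b : 'I_k) : 'I_k := if (val a < val b)%N then a else b.

Definition fstep (r : 'I_n * 'I_n * sgn) (X : param * param) : param * param :=
  let: (u, v, s) := r in
  let: (L, U) := X in
  ( [ffun w => [ffun om : Omega w =>
        if w == v then
          maxo (L w om) (match shift om u (- sgn_val s)%R with
                         | Some om' => L w om' | None => L w om end)
        else L w om]] : param,
    [ffun w => [ffun om : Omega w =>
        if w == v then
          mino (U w om) (match shift om u (sgn_val s) with
                         | Some om' => U w om' | None => U w om end)
        else U w om]] : param ).

End PRN.

(* "the fixpoint of iterating f from x": the first iterate of f from x that is
   a fixpoint of f (on a finite type it is reached within #|T| steps if at all;
   if no iterate is a fixpoint, the value defaults to x). *)
Definition iter_fix (T : finType) (f : T -> T) (x : T) : T :=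
  match [pick k : 'I_#|T|.+1 | f (iter k f x) == iter k f x] with
  | Some k => iter k f x
  | None => x
  end.

Section Nabla.
Variables (n : nat) (I : {set 'I_n * 'I_n}) (m : 'I_n -> nat).

Definition nabla_r (r : 'I_n * 'I_n * sgn) (X : param I m * param I m)
  : param I m * param I m :=
  if r.2 == SObs then X else iter_fix (fstep r) X.

(* nabla_{R'}: fixpoint of iterating the composition of the nabla_r, r in R'
   (composition taken along the enumeration of the finite set R') *)
Definition nabla_set (R' : {set 'I_n * 'I_n * sgn}) (X : param I m * param I m)
  : param I m * param I m :=
  iter_fix (foldr (fun r g => nabla_r r \o g) id (enum R')) X.

End Nabla.

Definition well_formed (n : nat) (I : {set 'I_n * 'I_n})
  (R : {set 'I_n * 'I_n * sgn}) : Prop :=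
  (forall u v c, (u, v, c) \in R -> (u, v) \in I) /\
  (forall u v, ~ ((u, v, SPos) \in R /\ (u, v, SNeg) \in R)).

Definition Mv (n : nat) (R : {set 'I_n * 'I_n * sgn}) (v : 'I_n)
  : {set 'I_n * 'I_n * sgn} :=
  [set r in R | (r.1.2 == v) && (r.2 != SObs)].

Definition ord_le (n : nat) (I : {set 'I_n * 'I_n}) (m : 'I_n -> nat)
  (R : {set 'I_n * 'I_n * sgn}) (v : 'I_n) (w w' : Omega I m v) : Prop :=
  forall u, u \in regs I v ->
    if (u, v, SPos) \in R then (val (val w u) <= val (val w' u))%N
    else if (u, v, SNeg) \in R then (val (val w' u) <= val (val w u))%N
    else val (val w u) == val (val w' u).

(* Main.v *)
Require Import Defs.
From HB Require Import structures.
From mathcomp Require Import all_boot all_order all_algebra.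
From mathcomp Require Import zify.



Section IterFix.
Variables (T : finType) (f : T -> T) (le : T -> T -> Prop).
Hypotheses (le_refl : forall x, le x x)
  (le_trans : forall x y z, le x y -> le y z -> le x z)
  (le_anti : forall x y, le x y -> le y x -> x = y)
  (f_ext : forall x, le x (f x)).

Lemma iter_chain x a b : (a <= b)%N -> le (iter a f x) (iter b f x).
Proof.
elim: b => [|b IH]; first by rewrite leqn0 => /eqP ->.
rewrite leq_eqVlt => /orP [/eqP -> //| H].
apply: le_trans (IH H) _; rewrite iterS; exact: f_ext.
Qed.

Lemma iter_repeat x a b : (a < b)%N -> iter a f x = iter b f x ->
  f (iter a f x) = iter a f x.
Proof.
move=> Hab Heq.
apply: le_anti; last exact: f_ext.
rewrite -iterS Heq; apply: iter_chain; done.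
Qed.

Lemma iter_fix_fix x : f (Defs.iter_fix f x) = Defs.iter_fix f x.
Proof.
rewrite /Defs.iter_fix; case: pickP => [k /eqP // | Hn].
exfalso.
have inj : injective (fun k : 'I_#|T|.+1 => iter k f x).
  move=> i j /= Hij; apply/val_inj => /=.
  case: (ltngtP i j) => // H.
  - by move: (Hn i); rewrite (iter_repeat _ _ _ H Hij) eqxx.
  - by move: (Hn j); rewrite (iter_repeat _ _ _ H (esym Hij)) eqxx.
have := leq_card _ inj; rewrite card_ord ltnn; done.
Qed.

Lemma iter_fix_ge x : le x (Defs.iter_fix f x).
Proof.
rewrite /Defs.iter_fix; case: pickP => [k _ | _] //.
exact: (iter_chain x _ _ (leq0n k)).
Qed.

Lemma iter_fix_id x : f x = x -> Defs.iter_fix f x = x.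
Proof.
move=> Hx.
have H : forall k, iter k f x = x by elim=> [|k IH] //; rewrite iterS IH.
by rewrite /Defs.iter_fix; case: pickP => [k _|_].
Qed.
End IterFix.

Lemma SPos_neq : SPos != SObs. Proof. by apply/eqP. Qed.
Lemma SNeg_neq : SNeg != SObs. Proof. by apply/eqP. Qed.

Section Main.
Variables (n : nat) (I : {set 'I_n * 'I_n}) (m : 'I_n -> nat).

Definition ple (X Y : param I m * param I m) : Prop :=
  forall w (om : Omega I m w), (val (X.1 w om) <= val (Y.1 w om))%N /\
                              (val (Y.2 w om) <= val (X.2 w om))%N.

Lemma ple_refl X : ple X X.
Proof. by move=> w om; rewrite !leqnn. Qed.

Lemma ple_trans X Y Z : ple X Y -> ple Y Z -> ple X Z.
Proof.
move=> H1 H2 w om; have [a b] := H1 w om; have [c d] := H2 w om.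
split; [exact: leq_trans a c | exact: leq_trans d b].
Qed.

Lemma ple_anti X Y : ple X Y -> ple Y X -> X = Y.
Proof.
case: X => L U; case: Y => L' U' H1 H2.
have E1 : L = L'.
  apply/ffunP => w; apply/ffunP => om; apply/val_inj.
  have [a _] := H1 w om; have [b _] := H2 w om; apply/eqP; rewrite eqn_leq a b //.
have E2 : U = U'.
  apply/ffunP => w; apply/ffunP => om; apply/val_inj.
  have [_ a] := H1 w om; have [_ b] := H2 w om; apply/eqP; rewrite eqn_leq a b //.
by rewrite E1 E2.
Qed.

Lemma fstep_ext r X : ple X (fstep r X).
Proof.
case: r => [[u v] s]; case: X => L U w om /=; rewrite !ffunE.
case: (w == v); last by rewrite !leqnn.
rewrite /maxo /mino; split.
- by case: ifP => // /ltnW.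
- by case: ifP => // /negbT; rewrite -leqNgt.
Qed.

Lemma nabla_r_ext r X : ple X (nabla_r r X).
Proof.
rewrite /nabla_r; case: ifP => _; first exact: ple_refl.
exact: (iter_fix_ge _ (fstep r) ple ple_refl ple_trans (fstep_ext r) X).
Qed.

Lemma fold_ext s X : ple X (foldr (fun r g => @nabla_r n I m r \o g) id s X).
Proof.
elim: s X => [|r s IH] X /=; first exact: ple_refl.
apply: ple_trans (IH X) _; exact: nabla_r_ext.
Qed.

Lemma fold_fix s X : foldr (fun r g => @nabla_r n I m r \o g) id s X = X ->
  forall r, r \in s -> nabla_r r X = X.
Proof.
elim: s => [|r s IH] //= H r'.
have E : foldr (fun r g => @nabla_r n I m r \o g) id s X = X.
  apply: ple_anti; last exact: fold_ext.
  rewrite -[X in ple _ X]H; exact: nabla_r_ext.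
rewrite in_cons => /orP [/eqP -> | Hr]; last exact: IH.
by rewrite -{1}E.
Qed.

Lemma shift_some v (om om' : Omega I m v) u d :
  shift om u d = Some om' ->
  [/\ u \in regs I v, (0 <= (val (val om u))%:Z + d)%R,
      ((val (val om u))%:Z + d <= (m u)%:Z)%R &
      forall x, val (val om' x) = if x == u then absz ((val (val om u))%:Z + d)%R
                                  else val (val om x)].
Proof.
rewrite /shift.
case: ifP => // /andP [/andP [Hu H0] Hm].
case: insubP => // om1 _ Hval [<-].
split => // x; rewrite Hval ffunE.
case: eqP => Hx.
- subst x; apply: inordK; lia.
- apply: inordK; exact: ltn_ord.
Qed.

Lemma shift_ex v (om : Omega I m v) u d :
  u \in regs I v -> (0 <= (val (val om u))%:Z + d)%R ->
  ((val (val om u))%:Z + d <= (m u)%:Z)%R ->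
  exists om', shift om u d = Some om'.
Proof.
move=> Hu H0 Hm; rewrite /shift Hu H0 Hm /=.
case: insubP => [om1 _ _|]; first by exists om1.
move/negP; case.
apply/forallP => x; apply/implyP => Hx.
rewrite ffunE.
have -> : (x == u) = false by apply/negP => /eqP E; subst x; rewrite Hu in Hx.
rewrite (_ : val (inord (sval om x) : 'I_(m x).+1) = sval om x); last by apply: inordK; exact: ltn_ord.
by have := valP om => /forallP /(_ x) /implyP /(_ Hx).
Qed.

Lemma shift_dec v (om : Omega I m v) u d : d = (-1)%R ->
  u \in regs I v -> (0 < val (val om u))%N ->
  exists om', shift om u d = Some om' /\
    forall x, val (val om' x) = if x == u then (val (val om u)).-1 else val (val om x).
Proof.
move=> -> Hu Hp.
have Hm : (val (val om u) <= m u)%N by have := ltn_ord (val om u).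
have [om' Hsh] : exists om', shift om u (-1)%R = Some om'.
  apply: shift_ex => //; lia.
exists om'; split => // x.
have [_ _ _ Hv] := shift_some _ _ _ _ _ Hsh.
rewrite Hv; case: eqP => // _; lia.
Qed.

Lemma shift_inc v (om : Omega I m v) u d : d = 1%R ->
  u \in regs I v -> (val (val om u) < m u)%N ->
  exists om', shift om u d = Some om' /\
    forall x, val (val om' x) = if x == u then (val (val om u)).+1 else val (val om x).
Proof.
move=> -> Hu Hp.
have [om' Hsh] : exists om', shift om u 1%R = Some om'.
  apply: shift_ex => //; lia.
exists om'; split => // x.
have [_ _ _ Hv] := shift_some _ _ _ _ _ Hsh.
rewrite Hv; case: eqP => // _; lia.
Qed.

Lemma ord_if_refl (a b : bool) (p : nat) :
  if a then (p <= p)%N else if b then (p <= p)%N else p == p.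
Proof. by case: a; case: b. Qed.

Definition dist v (w w' : Omega I m v) : nat :=
  \sum_(x < n) ((val (val w x) - val (val w' x)) + (val (val w' x) - val (val w x)))%N.

Lemma sum_lt (F G : 'I_n -> nat) u :
  (forall x, x != u -> F x = G x) -> (F u < G u)%N ->
  (\sum_(x < n) F x < \sum_(x < n) G x)%N.
Proof.
move=> Heq Hu; rewrite (bigD1 u) //= [X in (_ < X)%N](bigD1 u) //=.
rewrite (eq_bigr G); last by move=> x /Heq.
by rewrite ltn_add2r.
Qed.

Variables (R : {set 'I_n * 'I_n * sgn}) (v : 'I_n).

Lemma omega_eq (w w' : Omega I m v) :
  (forall x, val (val w x) = val (val w' x)) -> w = w'.
Proof.
move=> H; apply/val_inj/ffunP => x; apply/val_inj; exact: H.
Qed.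

Lemma monotone (L U : param I m) :
  well_formed I R ->
  (forall u s, (u, v, s) \in R -> s != SObs -> fstep (u, v, s) (L, U) = (L, U)) ->
  forall w w' : Omega I m v, @ord_le n I m R v w w' ->
      (val (L v w) <= val (L v w'))%N /\ (val (U v w) <= val (U v w'))%N.
Proof.
move=> [_ Hwf] Hfix.
have FL : forall u s (om om' : Omega I m v), (u, v, s) \in R -> s != SObs ->
    shift om u (- sgn_val s)%R = Some om' -> (val (L v om') <= val (L v om))%N.
  move=> u s om om' HR Hs Hsh.
  have := congr1 (fun X : param I m * param I m => val (X.1 v om)) (Hfix u s HR Hs).
  rewrite /= !ffunE eqxx Hsh /maxo.
  case: ifP => //; last by move/negbT; rewrite -leqNgt.
  by move=> _ ->.
have FU : forall u s (om om' : Omega I m v), (u, v, s) \in R -> s != SObs ->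
    shift om u (sgn_val s) = Some om' -> (val (U v om) <= val (U v om'))%N.
  move=> u s om om' HR Hs Hsh.
  have := congr1 (fun X : param I m * param I m => val (X.2 v om)) (Hfix u s HR Hs).
  rewrite /= !ffunE eqxx Hsh /mino.
  case: ifP; first by move=> /ltnW H _.
  by move=> _ <-.
move=> w w'.
move: {2}(dist v w w') (leqnn (dist v w w')) => d.
elim: d w w' => [|d IH] w w' Hd Hle.
  have -> : w = w'.
    apply: omega_eq => x; move: Hd; rewrite leqn0 /dist sum_nat_eq0 => /forallP /(_ x).
    rewrite addn_eq0 !subn_eq0 => /andP [a b]; apply/eqP; rewrite eqn_leq a b //.
  by rewrite !leqnn.
case: (boolP [exists x, val (val w x) != val (val w' x)]); last first.
  rewrite negb_exists => /forallP H.
  have -> : w = w' by apply: omega_eq => x; move: (H x); rewrite negbK => /eqP.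
  by rewrite !leqnn.
move=> /existsP [u Hne].
have Hu : u \in regs I v.
  apply/negPn/negP => Hnu; move: Hne.
  have := valP w => /forallP /(_ u) /implyP /(_ Hnu) /eqP ->.
  by have := valP w' => /forallP /(_ u) /implyP /(_ Hnu) /eqP ->.
have Hu' := Hle u Hu.
have Hmw : (val (val w u) <= m u)%N by have := ltn_ord (val w u).
have Hmw' : (val (val w' u) <= m u)%N by have := ltn_ord (val w' u).
case HP: ((u, v, SPos) \in R) in Hu'.
- have Hlt : (val (val w u) < val (val w' u))%N by rewrite ltn_neqAle Hne Hu'.
  split.
  + have [w'' [Hsh Hv]] := @shift_dec v w' u (- sgn_val SPos)%R erefl Hu (leq_ltn_trans (leq0n _) Hlt).
    have := FL u SPos w' w'' HP SPos_neq Hsh.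
    suff : (val (L v w) <= val (L v w''))%N by move=> H1 H2; apply: leq_trans H1 H2.
    apply: (proj1 (IH w w'' _ _)).
      rewrite -ltnS; apply: leq_trans Hd; apply: (@sum_lt _ _ u).
        by move=> x /negbTE Hx; rewrite Hv Hx.
      rewrite Hv eqxx /=; move: Hlt => /= Hlt; lia.
    move=> x Hx; have := Hle x Hx; rewrite Hv.
    case: (x =P u) => [-> |_] //; rewrite HP /=; move: Hlt => /= Hlt; lia.
  + have [w'' [Hsh Hv]] := @shift_inc v w u (sgn_val SPos)%R erefl Hu (leq_trans Hlt Hmw').
    have := FU u SPos w w'' HP SPos_neq Hsh.
    move=> H1; apply: leq_trans H1 _.
    apply: (proj2 (IH w'' w' _ _)).
      rewrite -ltnS; apply: leq_trans Hd; apply: (@sum_lt _ _ u).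
        by move=> x /negbTE Hx; rewrite Hv Hx.
      rewrite Hv eqxx /=; move: Hlt => /= Hlt; lia.
    move=> x Hx; have := Hle x Hx; rewrite Hv.
    case: (x =P u) => [-> |_] //; rewrite HP /=; move: Hlt => /= Hlt; lia.
case HN: ((u, v, SNeg) \in R) in Hu'; last by rewrite Hu' in Hne.
- have Hlt : (val (val w' u) < val (val w u))%N by rewrite ltn_neqAle eq_sym Hne Hu'.
  split.
  + have [w'' [Hsh Hv]] := @shift_inc v w' u (- sgn_val SNeg)%R (GRing.opprK _) Hu (leq_trans Hlt Hmw).
    have := FL u SNeg w' w'' HN SNeg_neq Hsh.
    suff : (val (L v w) <= val (L v w''))%N by move=> H1 H2; apply: leq_trans H1 H2.
    apply: (proj1 (IH w w'' _ _)).
      rewrite -ltnS; apply: leq_trans Hd; apply: (@sum_lt _ _ u).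
        by move=> x /negbTE Hx; rewrite Hv Hx.
      rewrite Hv eqxx /=; move: Hlt => /= Hlt; lia.
    move=> x Hx; have := Hle x Hx; rewrite Hv.
    case: (x =P u) => [-> |_] //; rewrite HP HN /=; move: Hlt => /= Hlt; lia.
  + have [w'' [Hsh Hv]] := @shift_dec v w u (sgn_val SNeg)%R erefl Hu (leq_ltn_trans (leq0n _) Hlt).
    have := FU u SNeg w w'' HN SNeg_neq Hsh.
    move=> H1; apply: leq_trans H1 _.
    apply: (proj2 (IH w'' w' _ _)).
      rewrite -ltnS; apply: leq_trans Hd; apply: (@sum_lt _ _ u).
        by move=> x /negbTE Hx; rewrite Hv Hx.
      rewrite Hv eqxx /=; move: Hlt => /= Hlt; lia.
    move=> x Hx; have := Hle x Hx; rewrite Hv.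
    case: (x =P u) => [-> |_] //; rewrite HP HN /=; move: Hlt => /= Hlt; lia.
Qed.

End Main.

Lemma fold_id n (I : {set 'I_n * 'I_n}) (m : 'I_n -> nat) s (X : param I m * param I m) :
  (forall r, r \in s -> nabla_r r X = X) ->
  foldr (fun r g => @nabla_r n I m r \o g) id s X = X.
Proof.
elim: s => [|r s IH] //= H.
rewrite IH; first by apply: H; rewrite in_cons eqxx.
by move=> r' Hr'; apply: H; rewrite in_cons Hr' orbT.
Qed.

Theorem lemma4 (n : nat) (I : {set 'I_n * 'I_n}) (m : 'I_n -> nat)
  (R : {set 'I_n * 'I_n * sgn}) (v : 'I_n) (L U : param I m) :
  well_formed I R ->
  (nabla_set (Mv R v) (L, U) = (L, U) <->
   (forall w w' : Omega I m v, @ord_le n I m R v w w' ->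
      (val (L v w) <= val (L v w'))%N /\ (val (U v w) <= val (U v w'))%N)).
Proof.
move=> Hwf; split.
- move=> Hfix.
  set g := foldr (fun r g => @nabla_r n I m r \o g) id (enum (Mv R v)).
  have Hg : g (L, U) = (L, U).
    have := iter_fix_fix _ g (@ple n I m) (@ple_refl n I m) (@ple_trans n I m)
      (@ple_anti n I m) (@fold_ext n I m _) (L, U).
    by move: Hfix; rewrite /nabla_set -/g => ->.
  apply: (@monotone n I m R v L U Hwf) => u s HR Hs.
  have Hr : nabla_r (u, v, s) (L, U) = (L, U).
    apply: (@fold_fix n I m _ _ Hg); rewrite mem_enum inE HR /= eqxx Hs //.
  move: Hr; rewrite /nabla_r /= (negbTE Hs) => Hr.
  have := iter_fix_fix _ (fstep (u, v, s)) (@ple n I m) (@ple_refl n I m) (@ple_trans n I m)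
      (@ple_anti n I m) (@fstep_ext n I m _) (L, U).
  by rewrite Hr.
- move=> Hmon; rewrite /nabla_set; apply: iter_fix_id; apply: fold_id.
  move=> [[u v'] s]; rewrite mem_enum inE /= => /andP [HR /andP [/eqP Ev Hs]].
  subst v'.
  rewrite /nabla_r /= (negbTE Hs); apply: iter_fix_id.
  have HPN : (u, v, SPos) \in R -> (u, v, SNeg) \in R -> False.
    by move=> a b; apply: (proj2 Hwf u v).
  rewrite /fstep; congr (_, _); apply/ffunP => w; apply/ffunP => om; rewrite !ffunE;
    case: (w =P v) => [Ew|] //; subst w.
  + case Hsh: shift => [om'|]; last by rewrite /maxo ltnn.
    have [Hu H0 Hm Hv] := @shift_some n I m _ _ _ _ _ Hsh.
    have Hord : ord_le R om' om.
      move=> x Hx; rewrite Hv; case: (x =P u) => [->|_]; last exact: ord_if_refl.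
      move: H0 Hm; case: s HR Hs Hsh Hv => HR Hs Hsh Hv //= H0 Hm.
      * rewrite HR; lia.
      * have -> : ((u, v, SPos) \in R) = false by apply/negP => a; exact: HPN a HR.
        rewrite HR; lia.
      * by rewrite eqxx in Hs.
    rewrite /maxo; case: ifP => // H.
    by move: H; rewrite ltnNge (proj1 (Hmon _ _ Hord)).
  + case Hsh: shift => [om'|]; last by rewrite /mino ltnn.
    have [Hu H0 Hm Hv] := @shift_some n I m _ _ _ _ _ Hsh.
    have Hord : ord_le R om om'.
      move=> x Hx; rewrite Hv; case: (x =P u) => [->|_]; last exact: ord_if_refl.
      move: H0 Hm; case: s HR Hs Hsh Hv => HR Hs Hsh Hv //= H0 Hm.
      * rewrite HR; lia.
      * have -> : ((u, v, SPos) \in R) = false by apply/negP => a; exact: HPN a HR.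
        rewrite HR; lia.
      * by rewrite eqxx in Hs.
    rewrite /mino; case: ifP => // /negbT H.
    apply/val_inj/eqP; rewrite eqn_leq (proj2 (Hmon _ _ Hord)) andbT.
    by move: H; rewrite -leqNgt.
Qed.
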